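(* Let $\emptyset\neq S\subseteq\{1,\dots,n\}$. Then $\nabla\Phi(\mathbf{x}(S))\,\mathbf{d}\le 0$ for all $\mathbf{d}\in\mathcal{F}(\mathbf{x}(S))$. Moreover, if $\nabla^2\Phi(\tilde{\mathbf{x}})$ is positive definite for every $\tilde{\mathbf{x}}\in\Delta$, then $\nabla\Phi(\mathbf{x}(S))\,\mathbf{d}<0$ for every $\mathbf{d}\in\mathcal{F}(\mathbf{x}(S))$ with $\mathrm{supp}(\mathbf{d})\not\subseteq S$.
   Context: Let $\Delta=\{\mathbf{x}\in\mathbb{R}^n:\mathbf{0}\le\mathbf{x}\le\mathbf{1},\ \mathbf{1}^{\mathsf T}\mathbf{x}=1\}$ and $\mathrm{supp}(\mathbf{x})=\{i:x_i\neq0\}$. For non-empty $S\subseteq\{1,\dots,n\}$, $\mathbf{x}(S)\in\Delta$ has $x(S)_i=1/|S|$ for $i\in S$ and $0$ otherwise. For $\mathbf{x}\in\Delta$, $\mathcal{F}(\mathbf{x})=\{\mathbf{d}\in\mathbb{R}^n:\mathbf{1}^{\mathsf T}\mathbf{d}=0,\ d_i\ge0\text{ whenever }x_i=0\}$, and $\mathcal{P}(\mathbf{x})$ is the set of vectors in $\Delta$ obtained by permuting the coordinates of $\mathbf{x}$. Let $\Phi:X\to\mathbb{R}$ be twice continuously differentiable on an open set $X\supset\Delta$, satisfying for every $\mathbf{x}\in\Delta$: (C1) $\nabla^2\Phi(\mathbf{x})$ is positive semidefinite; (C2) $\|\nabla^2\Phi(\mathbf{x})\|_2<2$ (spectral norm);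 (C3) $\Phi$ is constant on $\mathcal{P}(\mathbf{x})$. The gradient $\nabla\Phi(\mathbf{x})$ is a row vector. *)

(* Defs.v *)
From HB Require Import structures.
From mathcomp Require Import all_boot all_order all_algebra all_fingroup.
From mathcomp Require Import all_classical all_reals all_analysis.
Set Implicit Arguments. Unset Strict Implicit. Unset Printing Implicit Defensive.
Import Order.TTheory GRing.Theory Num.Theory.
Import numFieldNormedType.Exports.
Local Open Scope classical_set_scope.
Local Open Scope ring_scope.

Section Defs.
Variables (R : realType) (n : nat).

Definition ebasis (i : 'I_n) : 'rV[R]_n := delta_mx 0 i.

Definition partial (i : 'I_n) (f : 'rV[R]_n -> R) : 'rV[R]_n -> R :=
  fun x => 'D_(ebasis i) f x.

Definition grad (f : 'rV[R]_n -> R) (x : 'rV[R]_n) : 'rV[R]_n :=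
  \row_i partial i f x.

Definition hessian (f : 'rV[R]_n -> R) (x : 'rV[R]_n) : 'M[R]_n :=
  \matrix_(i, j) partial j (partial i f) x.

Definition C2_on (X : set 'rV[R]_n) (f : 'rV[R]_n -> R) : Prop :=
  [/\ forall x, X x -> differentiable f x,
      forall i x, X x -> differentiable (partial i f) x &
      forall i j, {in X, continuous (partial j (partial i f))}].

Definition simplex : set 'rV[R]_n :=
  [set x | (forall i, 0 <= x 0 i <= 1) /\ \sum_i x 0 i = 1].

Definition xS (S : {set 'I_n}) : 'rV[R]_n :=
  \row_i (if i \in S then (#|S|%:R)^-1 else 0).

Definition feasible (x : 'rV[R]_n) : set 'rV[R]_n :=
  [set d | \sum_i d 0 i = 0 /\ (forall i, x 0 i = 0 -> 0 <= d 0 i)].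

Definition supp (x : 'rV[R]_n) : {set 'I_n} := [set i | x 0 i != 0].

Definition permute (s : 'S_n) (x : 'rV[R]_n) : 'rV[R]_n := \row_i x 0 (s i).
Definition perms (x : 'rV[R]_n) : set 'rV[R]_n :=
  [set y | exists s : 'S_n, y = permute s x].

Definition qform (A : 'M[R]_n) (v : 'rV[R]_n) : R := (v *m A *m v^T) 0 0.

Definition psd (A : 'M[R]_n) : Prop := forall v, 0 <= qform A v.
Definition pd (A : 'M[R]_n) : Prop := forall v, v != 0 -> 0 < qform A v.

Definition sqnorm2 (v : 'rV[R]_n) : R := \sum_i v 0 i ^+ 2.

(* spectral norm ||A||_2 < c  (operator norm induced by the Euclidean norm,
   i.e. sup_{v<>0} ||v A^T||_2/||v||_2 < c, written as the existence of a
   bound c' < c) *)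
Definition spec_norm_lt (A : 'M[R]_n) (c : R) : Prop :=
  exists2 c', 0 <= c' < c &
    forall v : 'rV[R]_n, sqnorm2 (v *m A^T) <= c' ^+ 2 * sqnorm2 v.

Definition dirder (g d : 'rV[R]_n) : R := \sum_i g 0 i * d 0 i.

End Defs.
Arguments simplex {R n}.

(* Main.v *)
Require Import Defs.
From HB Require Import structures.
From mathcomp Require Import all_boot all_order all_algebra all_fingroup.
From mathcomp Require Import all_classical all_reals all_analysis.
Import Order.TTheory GRing.Theory Num.Theory.
Import numFieldNormedType.Exports.
Local Open Scope classical_set_scope.
Local Open Scope ring_scope.

Lemma D_sum (R : realType) n (f : 'rV[R]_n -> R) (y v : 'rV[R]_n) :
  differentiable f y -> 'D_v f y = \sum_i v 0 i * partial i f y.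
Proof.
move=> df; rewrite deriveE // {1}(row_sum_delta v) linear_sum.
apply: eq_bigr => i _; rewrite linearZ /= /partial deriveE //.
Qed.

Lemma line_der (R : realType) n (f : 'rV[R]_n -> R) (x v : 'rV[R]_n) (t : R) :
  differentiable f (t *: v + x) ->
  is_derive t 1 (fun s => f (s *: v + x)) ('D_v f (t *: v + x)).
Proof.
move=> df.
have E : (fun h : R => h^-1 *: (((fun s => f (s*:v + x)) \o shift t) (h *: 1) - f (t*:v + x)))
   = (fun h => h^-1 *: ((f \o shift (t*:v+x)) (h *: v) - f (t*:v+x))).
  apply: funext => h /=; congr (_ *: (f _ - _)).
  by rewrite /shift /= scalerDl addrA [X in X *: v]mulr1.
apply: DeriveDef; first by rewrite /derivable E; exact: diff_derivable.
by rewrite /derive E.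
Qed.

Lemma right_of_dnbhs (R : realType) (g : R -> R) (l : R) :
  g @ 0^' --> l -> g @ 0^'+ --> l.
Proof.
move=> gl; apply: cvg_trans gl => P /=.
rewrite /nbhs /= /dnbhs /within /=.
apply: filterS => y Py y0; by apply: Py; rewrite gt_eqF.
Qed.

Lemma qformE (R : realType) n (A : 'M[R]_n) (v : 'rV[R]_n) :
  qform A v = \sum_k v 0 k * \sum_l v 0 l * A k l.
Proof.
rewrite /qform !mxE.
under eq_bigr do rewrite !mxE big_distrl.
rewrite exchange_big; apply: eq_bigr => k _ /=; rewrite big_distrr.
by apply: eq_bigr => l _ /=; rewrite mulrCA mulrC.
Qed.

Lemma claimA (R : realType) n (X : set 'rV[R]_n) (Phi : 'rV[R]_n -> R)
  (hXsub : simplex `<=` X) (hC2 : C2_on X Phi) (x v : 'rV[R]_n) (T : R)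
  (Tpos : 0 < T)
  (pS : forall s, 0 <= s <= T -> simplex (s *: v + x))
  (hEq : Phi (T *: v + x) = Phi x) :
  exists2 s, 0 < s < T & exists2 c, 0 < c &
    dirder (grad Phi x) v = - (c * qform (hessian Phi (s *: v + x)) v).
Proof.
case: hC2 => hd1 hd2 _.
pose p s := s *: v + x.
have dP s : 0 <= s <= T -> differentiable Phi (p s).
  by move=> hs; apply: hd1; apply: hXsub; exact: pS.
have dPk k s : 0 <= s <= T -> differentiable (partial k Phi) (p s).
  by move=> hs; apply: hd2; apply: hXsub; exact: pS.
pose h s := Phi (p s).
pose hd s := \sum_k v 0 k * partial k Phi (p s).
pose hdd s := qform (hessian Phi (p s)) v.
have hder s : 0 <= s <= T -> is_derive s 1 h (hd s).
  move=> hs; apply: is_derive_eq; first exact: (@line_der R n Phi x v s (dP s hs)).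
  by rewrite D_sum //; exact: dP.
have hdder s : 0 <= s <= T -> is_derive s 1 hd (hdd s).
  move=> hs.
  have := @is_derive_sum R R^o R^o n (fun k s => v 0 k * partial k Phi (p s)) s 1
     (fun k => v 0 k * 'D_v (partial k Phi) (p s)).
  rewrite fct_sumE => H; apply: is_derive_eq; first apply: H.
    move=> k; apply: is_deriveZ; exact: (@line_der R n (partial k Phi) x v s (dPk k s hs)).
  rewrite /hdd qformE; apply: eq_bigr => k _; rewrite D_sum //; last exact: dPk.
  congr (_ * _); apply: eq_bigr => l _; by rewrite /hessian mxE.
have hcont a b : 0 <= a -> b <= T -> forall (f df : R -> R),
    (forall s, 0 <= s <= T -> is_derive s 1 f (df s)) ->
    {within `[a, b], continuous f}.
  move=> a0 bT f df H; apply: derivable_within_continuous => s.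
  rewrite in_itv /= => /andP[aS sb].
  have hs : 0 <= s <= T by rewrite (le_trans a0 aS) (le_trans sb bT).
  by have [] := H s hs.
have hin a b : 0 <= a -> b <= T -> forall (f df : R -> R),
    (forall s, 0 <= s <= T -> is_derive s 1 f (df s)) ->
    forall s, s \in `]a, b[%R -> is_derive s 1 f (df s).
  move=> a0 bT f df H s; rewrite in_itv /= => /andP[aS sb]; apply: H.
  by rewrite (le_trans a0 (ltW aS)) (le_trans (ltW sb) bT).
have [c c0T Hc] := MVT Tpos (hin _ _ (lexx 0) (lexx T) _ _ hder)
   (hcont _ _ (lexx 0) (lexx T) _ _ hder).
move: c0T; rewrite in_itv /= => /andP[c0 cT].
have hdc : hd c = 0.
  move: Hc; rewrite /h /p hEq scale0r add0r subrr subr0 => /esym/eqP.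
  by rewrite mulf_eq0 (gt_eqF Tpos) orbF => /eqP.
have [c2 c20c Hc2] := MVT c0 (hin _ _ (lexx 0) (ltW cT) _ _ hdder)
   (hcont _ _ (lexx 0) (ltW cT) _ _ hdder).
move: c20c; rewrite in_itv /= => /andP[c20 c2c].
exists c2; first by rewrite c20 (lt_trans c2c cT).
exists c => //.
have -> : dirder (grad Phi x) v = hd 0.
  rewrite /dirder /hd /p scale0r add0r; apply: eq_bigr => k _.
  by rewrite mxE mulrC.
move: Hc2; rewrite hdc subr0 /hdd /p => H.
by rewrite mulrC -H add0r opprK.
Qed.
From mathcomp Require Import lra.
Lemma claimB (R : realType) n (Phi : 'rV[R]_n -> R) (x w : 'rV[R]_n) (eps : R)
  (eps0 : 0 < eps) (dP : differentiable Phi x)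
  (hsym : forall h, 0 < h < eps -> Phi (h *: w + x) = Phi (h *: (- w) + x)) :
  'D_w Phi x = 0.
Proof.
have H1 := @diff_derivable _ _ _ Phi x w dP; rewrite /derivable in H1.
have cw := @right_of_dnbhs _ _ _ H1.
have H2 := @diff_derivable _ _ _ Phi x (- w) dP; rewrite /derivable in H2.
have cmw := @right_of_dnbhs _ _ _ H2.
have E : (fun h : R => h^-1 *: ((Phi \o shift x) (h *: (- w)) - Phi x)) @ 0^'+ --> 'D_w Phi x.
  apply: cvg_trans cw; apply: near_eq_cvg; near=> h => /=.
  rewrite /shift /= hsym //; apply/andP; split.
    by near: h; exact: nbhs_right_gt.
  by near: h; exact: nbhs_right_lt.
have e1 : 'D_w Phi x = 'D_(- w) Phi x := cvg_unique _ E cmw.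
have : 'D_(- w) Phi x = - 'D_w Phi x by rewrite !deriveE // linearN.
rewrite -e1 => H. have H' : ((('D_w Phi x) : R) = - ('D_w Phi x : R)) := H. move: H'; set D := ('D_w Phi x : R). move=> H'. lra.
exact: norm_hausdorff.
Unshelve. all: by end_near.
Qed.

Theorem lemma4 (R : realType) (n : nat) (X : set 'rV[R]_n)
  (Phi : 'rV[R]_n -> R)
  (hXopen : open X) (hXsub : simplex `<=` X) (hC2 : C2_on X Phi)
  (hC1 : forall x, simplex x -> psd (hessian Phi x))
  (hC2norm : forall x, simplex x -> spec_norm_lt (hessian Phi x) 2)
  (hC3 : forall x, simplex x -> forall y, perms x y -> Phi y = Phi x)
  (S : {set 'I_n}) (hS : S != finset.set0) :
  (forall d, feasible (xS R S) d -> dirder (grad Phi (xS R S)) d <= 0) /\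
  ((forall x, simplex x -> pd (hessian Phi x)) ->
   forall d, feasible (xS R S) d -> ~~ (supp d \subset S) ->
     dirder (grad Phi (xS R S)) d < 0).
Proof.
pose T := (#|S|%:R : R)^-1.
have kgt0 : (0 < #|S|)%N by rewrite card_gt0.
have Tpos : 0 < T by rewrite invr_gt0 ltr0n.
have Tle1 : T <= 1 by rewrite invf_le1 ?ltr0n // ler1n.
have kT : #|S|%:R * T = 1 by rewrite mulfV // gt_eqF // ltr0n.
have xE k : xS R S 0 k = if k \in S then T else 0 by rewrite mxE.
have lineE (a b : 'I_n) (s : R) (k : 'I_n) : (s *: (ebasis R a - ebasis R b) + xS R S) 0 k
    = s * ((k == a)%:R - (k == b)%:R) + (if k \in S then T else 0).
  by rewrite !mxE /=.
have sumx : \sum_k (if k \in S then T else 0) = 1.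
  by rewrite -big_mkcond /= sumr_const -mulr_natl.
have sumd (F : 'I_n -> R) (a : 'I_n) : \sum_l (l == a)%:R * F l = F a.
  rewrite (bigD1 a) //= eqxx mul1r big1 ?addr0 // => l /negbTE ->.
  by rewrite mul0r.
have sumeb (a : 'I_n) : \sum_l ((l == a)%:R : R) = 1.
  by have := sumd (fun _ => 1) a; under eq_bigr do rewrite mulr1.
have pS (a b : 'I_n) (s : R) : a != b -> b \in S -> 0 <= s <= T -> (a \in S -> s + T <= 1) ->
    simplex (s *: (ebasis R a - ebasis R b) + xS R S).
  move=> ab bS /andP[s0 sT] haS; split.
    move=> k; rewrite lineE.
    case: (eqVneq k a) => [->|ka].
      rewrite ?eqxx (negbTE ab) subr0 mulr1.
      case: (boolP (a \in S)) => aS.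
        by have := haS aS; move=> h1; apply/andP; split; lra.
      by apply/andP; split; lra.
    case: (eqVneq k b) => [->|kb].
      rewrite ?eqxx bS /= ?(mulr0n, mulr1n).
      by apply/andP; split; lra.
    rewrite /= ?(mulr0n, mulr1n) subrr mulr0 add0r.
    by case: ifP => _; apply/andP; split; lra.
  under eq_bigr do rewrite lineE.
  by rewrite big_split /= -mulr_sumr sumrB !sumeb subrr mulr0 add0r sumx.
have permE (a b : 'I_n) (s : R) : a != b -> (a \in S) = (b \in S) ->
    permute (tperm a b) (s *: (ebasis R a - ebasis R b) + xS R S) =
    s *: (ebasis R b - ebasis R a) + xS R S.
  move=> ab hab; apply/rowP => k; rewrite mxE !lineE.
  case: (eqVneq k a) => [->|ka].
    by rewrite tpermL eqxx eq_sym (negbTE ab) hab.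
  case: (eqVneq k b) => [->|kb].
    by rewrite tpermR eqxx (negbTE ab) hab.
  have ak : a != k by rewrite eq_sym.
  have bk : b != k by rewrite eq_sym.
  by rewrite tpermD // (negbTE ka) (negbTE kb).
have permA (i j : 'I_n) : i \in S -> j \notin S ->
    permute (tperm i j) (xS R S) = T *: (ebasis R j - ebasis R i) + xS R S.
  move=> iS jS; have ij : i != j by apply: contraNneq jS => <-.
  apply/rowP => k; rewrite mxE lineE xE.
  case: (eqVneq k i) => [->|ki].
    rewrite tpermL ?eqxx (negbTE ij) (negbTE jS) iS /= ?(mulr0n, mulr1n).
    lra.
  have ji : j != i by rewrite eq_sym.
  case: (eqVneq k j) => [->|kj].
    rewrite tpermR ?eqxx ?(negbTE ji) iS (negbTE jS) /= ?(mulr0n, mulr1n); lra.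
  have ik : i != k by rewrite eq_sym.
  have jk : j != k by rewrite eq_sym.
  by rewrite tpermD // ?(negbTE ki) ?(negbTE kj) /= ?(mulr0n, mulr1n) subrr mulr0 add0r.
have xsimp : simplex (xS R S).
  split; first by move=> k; rewrite xE; case: ifP => _; apply/andP; split; lra.
  by under eq_bigr do rewrite xE; exact: sumx.
have /set0Pn [i0 i0S] := hS.
have dPx : differentiable Phi (xS R S).
  by case: hC2 => h1 _ _; apply: h1; apply: hXsub.
have Ddir v : 'D_v Phi (xS R S) = dirder (grad Phi (xS R S)) v.
  by rewrite D_sum // /dirder; apply: eq_bigr => l _; rewrite mxE mulrC.
have dirv (a b : 'I_n) : dirder (grad Phi (xS R S)) (ebasis R a - ebasis R b)
    = partial a Phi (xS R S) - partial b Phi (xS R S).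
  rewrite /dirder; under eq_bigr do rewrite !mxE /= mulrBr.
  rewrite sumrB; congr (_ - _).
    rewrite -[RHS](sumd (fun l => partial l Phi (xS R S)) a).
    by apply: eq_bigr => l _; rewrite mulrC.
  rewrite -[RHS](sumd (fun l => partial l Phi (xS R S)) b).
  by apply: eq_bigr => l _; rewrite mulrC.
have gS k : k \in S -> partial k Phi (xS R S) = partial i0 Phi (xS R S).
  move=> kS; case: (eqVneq k i0) => [->//|ki].
  have k2 : (1 < #|S|)%N by apply/card_gt1P; exists k, i0.
  have T2 : T + T <= 1.
    have H2 : (2%:R : R) <= #|S|%:R by rewrite ler_nat.
    by have := ler_wpM2r (ltW Tpos) H2; rewrite kT mulr_natl mulr2n.
  have := @claimB R n Phi (xS R S) (ebasis R k - ebasis R i0) T Tpos dPx.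
  rewrite Ddir dirv => H.
  suff E : partial k Phi (xS R S) - partial i0 Phi (xS R S) = 0.
    by move/eqP: E; rewrite subr_eq0 => /eqP.
  apply: H.
  move=> h /andP[h0 hT]; rewrite opprB -(permE k i0 h) //; last by rewrite kS i0S.
  symmetry; apply: hC3; last by exists (tperm k i0).
  apply: pS => //; first by rewrite (ltW h0) (ltW hT).
  by move=> _; lra.
have key j : j \notin S -> exists2 s, 0 <= s <= T & exists2 c, 0 < c &
    partial j Phi (xS R S) - partial i0 Phi (xS R S) =
    - (c * qform (hessian Phi (s *: (ebasis R j - ebasis R i0) + xS R S))
                 (ebasis R j - ebasis R i0)).
  move=> jS; have ji : j != i0 by apply: contraNneq jS => ->.
  have pS' s : 0 <= s <= T -> simplex (s *: (ebasis R j - ebasis R i0) + xS R S).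
    by move=> hs; apply: pS => // jS'; rewrite jS' in jS.
  have := @claimA R n X Phi hXsub hC2 (xS R S) (ebasis R j - ebasis R i0) T Tpos pS'.
  rewrite -permA //; move/(_ (hC3 _ xsimp _ _)) => [].
    by exists (tperm i0 j).
  move=> s /andP[s0 sT] [c c0 E]; exists s; first by rewrite (ltW s0) (ltW sT).
  by exists c => //; rewrite -dirv.
have vnz j : j \notin S -> ebasis R j - ebasis R i0 != 0.
  move=> jS; have ji : j != i0 by apply: contraNneq jS => ->.
  apply/negP => /eqP/rowP/(_ j); rewrite !mxE /= eqxx (negbTE ji) /=.
  move/eqP; rewrite subr0 oner_eq0 //.
have rewr (d : 'rV[R]_n) : \sum_k d 0 k = 0 -> dirder (grad Phi (xS R S)) d =
    \sum_k (partial k Phi (xS R S) - partial i0 Phi (xS R S)) * d 0 k.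
  move=> d0; rewrite /dirder; under eq_bigr do rewrite mxE.
  under [RHS]eq_bigr do rewrite mulrBl.
  by rewrite sumrB -mulr_sumr d0 mulr0 subr0.
have termle (d : 'rV[R]_n) (k : 'I_n) : feasible (xS R S) d ->
    (partial k Phi (xS R S) - partial i0 Phi (xS R S)) * d 0 k <= 0.
  case=> _ fd; case: (boolP (k \in S)) => kS.
    by rewrite gS // subrr mul0r.
  have dk : 0 <= d 0 k by apply: fd; rewrite xE (negbTE kS).
  have [s hs [c c0 ->]] := key k kS.
  have hsx : simplex (s *: (ebasis R k - ebasis R i0) + xS R S).
    apply: pS => //; first by apply: contraNneq kS => ->.
    by move=> kS'; rewrite kS' in kS.
  apply: mulr_le0_ge0 => //; rewrite oppr_le0; apply: mulr_ge0.
    exact: ltW.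
  exact: (hC1 _ hsx).
split.
  move=> d fd; rewrite rewr; last by case: fd.
  by apply: sumr_le0 => k _; exact: termle.
move=> hpd d fd hsub; have [j jsupp jS] := subsetPn hsub.
rewrite rewr; last by case: fd.
rewrite (bigD1 j) //=.
have t2 : \sum_(k < n | k != j)
    (partial k Phi (xS R S) - partial i0 Phi (xS R S)) * d 0 k <= 0.
  by apply: sumr_le0 => k _; exact: termle.
have dj : 0 < d 0 j.
  rewrite lt_def; move: jsupp; rewrite inE eq_sym => -> /=.
  by case: fd => _; apply; rewrite xE (negbTE jS).
have t1 : (partial j Phi (xS R S) - partial i0 Phi (xS R S)) * d 0 j < 0.
  rewrite pmulr_llt0 //.
  have [s hs [c c0 ->]] := key j jS.
  have hsx : simplex (s *: (ebasis R j - ebasis R i0) + xS R S).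
    apply: pS => //; first by apply: contraNneq jS => ->.
    by move=> jS'; rewrite jS' in jS.
  by rewrite oppr_lt0 mulr_gt0 //; exact: (hpd _ hsx _ (vnz j jS)).
lra.
Qed.
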